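(* Let $\boldsymbol{u}^\star=(1,1)^{\mathrm T}$ and $f(\boldsymbol{u})=\frac12\|\boldsymbol{u}\boldsymbol{u}^{\mathrm T}-\boldsymbol{u}^\star{\boldsymbol{u}^\star}^{\mathrm T}\|_1$ on $\mathbb{R}^2$. Then $\boldsymbol{u}_0:=(-1,1)^{\mathrm T}$ is a stationary point of $f$ that is not a global minimizer, and for no integer $p\ge1$ does there exist an active $C^p$-manifold for $f$ around $\boldsymbol{u}_0$.
   Context: $\|\cdot\|_1$ is the entrywise $\ell_1$-norm; $\partial f$ denotes the subdifferential (Fréchet = limiting = Clarke for this $f$). Active manifold: given $g:\mathbb{R}^d\to\mathbb{R}$ and $\bar{\boldsymbol{x}}$ with $\boldsymbol{0}\in\partial g(\bar{\boldsymbol{x}})$, a set $\mathbb{M}\subseteq\mathbb{R}^d$ containing $\bar{\boldsymbol{x}}$ is an active $C^p$-manifold around $\bar{\boldsymbol{x}}$ if there is $\varepsilon>0$ such that: (smoothness) $\mathbb{M}$ intersected with the open ball of radius $\varepsilon$ around $\bar{\boldsymbol{x}}$ is a $C^p$-smooth embedded submanifold of $\mathbb{R}^d$, and the restriction of $g$ to $\mathbb{M}$ is $C^p$-smooth near $\bar{\boldsymbol{x}}$ (i.e., agrees on $\mathbb{M}$ near $\bar{\boldsymbol{x}}$ with a $C^p$-smooth function defined on a neighborhood of $\bar{\boldsymbol{x}}$); (sharpness) $\inf\{\|\boldsymbol{v}\|:\boldsymbol{v}\in\partial g(\boldsymbol{x}),\ \boldsymbol{x}\in\mathbb{U}\setminus\mathbb{M}\}>0$,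 where $\mathbb{U}=\{\boldsymbol{x}:\|\boldsymbol{x}-\bar{\boldsymbol{x}}\|<\varepsilon,\ |g(\boldsymbol{x})-g(\bar{\boldsymbol{x}})|<\varepsilon\}$. *)

(* Defs.v *)
From Stdlib Require Import Reals.
From Coquelicot Require Import Coquelicot.
Open Scope R_scope.

Definition pt := (R * R)%type.

Definition inner (u v : pt) : R := fst u * fst v + snd u * snd v.
Definition norm2 (u : pt) : R := sqrt (inner u u).
Definition dist2 (u v : pt) : R := norm2 (fst u - fst v, snd u - snd v).

Definition ball2 (c : pt) (r : R) : pt -> Prop := fun z => dist2 z c < r.

(** u* = (1,1);  fobj(u) = f(u) = 1/2 || u u^T - u* u*^T ||_1  (entrywise l1 norm). *)
Definition ustar : pt := (1, 1).
Definition fobj (u : pt) : R :=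
  / 2 * ( Rabs (fst u * fst u - fst ustar * fst ustar)
        + Rabs (fst u * snd u - fst ustar * snd ustar)
        + Rabs (snd u * fst u - snd ustar * fst ustar)
        + Rabs (snd u * snd u - snd ustar * snd ustar)).

Definition u0 : pt := (-1, 1).

(** Frechet subdifferential: v in dg(x) iff
    liminf_{y -> x} (g y - g x - <v, y - x>) / |y - x| >= 0. *)
Definition frechet_subdiff (g : pt -> R) (x v : pt) : Prop :=
  forall eps, 0 < eps -> exists delta, 0 < delta /\
    forall y, dist2 y x < delta ->
      g y - g x - inner v (fst y - fst x, snd y - snd x) >= - eps * dist2 y x.

Definition partial1 (h : pt -> R) : pt -> R :=
  fun z => Derive (fun t => h (t, snd z)) (fst z).
Definition partial2 (h : pt -> R) : pt -> R :=
  fun z => Derive (fun t => h (fst z, t)) (snd z).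

Definition continuous_on2 (h : pt -> R) (U : pt -> Prop) : Prop :=
  forall z, U z -> forall eps, 0 < eps -> exists delta, 0 < delta /\
    forall y, dist2 y z < delta -> Rabs (h y - h z) < eps.

Fixpoint Cp_on (p : nat) (h : pt -> R) (U : pt -> Prop) : Prop :=
  match p with
  | O => continuous_on2 h U
  | S q => continuous_on2 h U /\
           (forall z, U z -> ex_derive (fun t => h (t, snd z)) (fst z)
                          /\ ex_derive (fun t => h (fst z, t)) (snd z)) /\
           Cp_on q (partial1 h) U /\ Cp_on q (partial2 h) U
  end.

(** C^p embedded submanifold of R^2 (of dimension 0, 1 or 2): locally the zero
    set of a C^p submersion to R^(2-k). *)
Definition submanifold_dim2 (S : pt -> Prop) : Prop :=
  forall m, S m -> exists r, 0 < r /\ forall z, ball2 m r z -> S z.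

Definition submanifold_dim1 (p : nat) (S : pt -> Prop) : Prop :=
  forall m, S m -> exists r, 0 < r /\ exists h : pt -> R,
    Cp_on p h (ball2 m r) /\
    (forall z, ball2 m r z -> (partial1 h z, partial2 h z) <> (0, 0)) /\
    (forall z, ball2 m r z -> (S z <-> h z = 0)).

Definition submanifold_dim0 (p : nat) (S : pt -> Prop) : Prop :=
  forall m, S m -> exists r, 0 < r /\ exists F1 F2 : pt -> R,
    Cp_on p F1 (ball2 m r) /\ Cp_on p F2 (ball2 m r) /\
    (forall z, ball2 m r z ->
       partial1 F1 z * partial2 F2 z - partial2 F1 z * partial1 F2 z <> 0) /\
    (forall z, ball2 m r z -> (S z <-> F1 z = 0 /\ F2 z = 0)).

Definition embedded_submanifold (p : nat) (S : pt -> Prop) : Prop :=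
  submanifold_dim0 p S \/ submanifold_dim1 p S \/ submanifold_dim2 S.

Definition active_manifold (p : nat) (g : pt -> R) (xbar : pt) (M : pt -> Prop)
  : Prop :=
  M xbar /\
  exists eps, 0 < eps /\
    embedded_submanifold p (fun x => M x /\ ball2 xbar eps x) /\
    (exists r, 0 < r /\ exists G : pt -> R,
        Cp_on p G (ball2 xbar r) /\
        forall x, M x -> ball2 xbar r x -> G x = g x) /\
    (* sharpness: inf { |v| : v in dg(x), x in U \ M } > 0 *)
    (exists c, 0 < c /\
       forall x v, ball2 xbar eps x -> Rabs (g x - g xbar) < eps -> ~ M x ->
         frechet_subdiff g x v -> c <= norm2 v).

(* Main.v *)
Require Import Defs.
From Stdlib Require Import Reals Lra Psatz Classical.
From Coquelicot Require Import Coquelicot.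
Open Scope R_scope.

Lemma fs_of_quad g x v :
  (forall y, g y - g x - inner v (fst y - fst x, snd y - snd x) >=
     - ((fst y - fst x) * (fst y - fst x) + (snd y - snd x) * (snd y - snd x))) ->
  frechet_subdiff g x v.
Proof.
  intros H; unfold frechet_subdiff; intros eps Heps. exists eps. split; [exact Heps|].
  intros y Hy. specialize (H y).
  unfold dist2, norm2, inner in *; simpl in *.
  remember ((fst y - fst x) * (fst y - fst x) + (snd y - snd x) * (snd y - snd x)) as Q eqn:EQ.
  assert (HQ : 0 <= Q).
  { rewrite EQ. pose proof (Rle_0_sqr (fst y - fst x)). pose proof (Rle_0_sqr (snd y - snd x)).
    unfold Rsqr in *. lra. }
  pose proof (sqrt_sqrt Q HQ). pose proof (sqrt_pos Q).
  nra.
Qed.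

Ltac absfacts :=
  repeat match goal with
  | |- context [Rabs ?X] =>
      let H1 := fresh in let H2 := fresh in
      pose proof (Rle_abs X) as H1; pose proof (Rabs_maj2 X) as H2;
      set (A := Rabs X) in *
  end.

Lemma Rabs_R0_eq X : X = 0 -> Rabs X = 0.
Proof. intros ->; apply Rabs_R0. Qed.

Lemma f_u0 : fobj u0 = 2.
Proof.
  unfold fobj, u0, ustar; simpl.
  replace (-1 * -1 - 1 * 1) with 0 by ring. replace (1*1-1*1) with 0 by ring.
  replace (-1 * 1 - 1 * 1) with (-2) by ring. replace (1 * -1 - 1 * 1) with (-2) by ring.
  rewrite Rabs_R0, Rabs_left by lra. lra.
Qed.

Lemma f_leg1 h : 0 < h < 1 -> fobj (-1, 1-h) = 2 - h*h/2.
Proof.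
  intros Hh. unfold fobj, ustar; simpl.
  rewrite (Rabs_R0_eq (-1 * -1 - 1*1)) by ring.
  rewrite (Rabs_left (-1 * (1 - h) - 1 * 1)) by nra.
  rewrite (Rabs_left ((1 - h) * -1 - 1 * 1)) by nra.
  rewrite (Rabs_left ((1 - h) * (1 - h) - 1 * 1)) by nra.
  field.
Qed.

Lemma f_leg2 h : 0 < h < 1 -> fobj (-1 + h, 1) = 2 - h*h/2.
Proof.
  intros Hh. unfold fobj, ustar; simpl.
  rewrite (Rabs_R0_eq (1 * 1 - 1*1)) by ring.
  rewrite (Rabs_left ((-1 + h) * 1 - 1 * 1)) by nra.
  rewrite (Rabs_left (1 * (-1 + h) - 1 * 1)) by nra.
  rewrite (Rabs_left ((-1 + h) * (-1 + h) - 1 * 1)) by nra.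
  field.
Qed.

Lemma sd_u0 : frechet_subdiff fobj u0 (0, 0).
Proof.
  apply fs_of_quad. intros [y1 y2]. rewrite f_u0.
  unfold fobj, ustar, u0, inner; simpl.
  pose proof (Rle_abs (y1 * y1 - 1 * 1)). pose proof (Rabs_maj2 (y1 * y1 - 1 * 1)).
  pose proof (Rle_abs (y2 * y2 - 1 * 1)). pose proof (Rabs_maj2 (y2 * y2 - 1 * 1)).
  pose proof (Rabs_maj2 (y1 * y2 - 1 * 1)). pose proof (Rabs_maj2 (y2 * y1 - 1 * 1)).
  pose proof (Rle_0_sqr (y1 + 1 - (y2 - 1))). pose proof (Rle_0_sqr (y1 + 1 + (y2 - 1))).
  unfold Rsqr in *.
  destruct (Rle_dec 0 (y1+1)); destruct (Rle_dec 0 (y2 - 1)); lra.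
Qed.

Lemma sd_leg1 h : 0 < h < 1 -> frechet_subdiff fobj (-1, 1-h) (0, h).
Proof.
  intros Hh. apply fs_of_quad. intros [y1 y2]. rewrite f_leg1 by exact Hh.
  unfold fobj, ustar, inner; simpl.
  pose proof (Rle_abs (y1 * y1 - 1 * 1)). pose proof (Rabs_maj2 (y1 * y1 - 1 * 1)).
  pose proof (Rabs_maj2 (y2 * y2 - 1 * 1)).
  pose proof (Rabs_maj2 (y1 * y2 - 1 * 1)). pose proof (Rabs_maj2 (y2 * y1 - 1 * 1)).
  pose proof (Rle_0_sqr (y1 + 1 - (y2 - (1-h)))). pose proof (Rle_0_sqr (y1 + 1 + (y2 - (1-h)))).
  unfold Rsqr in *.
  destruct (Rle_dec 0 (y1+1)); nra.
Qed.

Lemma sd_leg2 h : 0 < h < 1 -> frechet_subdiff fobj (-1 + h, 1) (-h, 0).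
Proof.
  intros Hh. apply fs_of_quad. intros [y1 y2]. rewrite f_leg2 by exact Hh.
  unfold fobj, ustar, inner; simpl.
  pose proof (Rle_abs (y2 * y2 - 1 * 1)). pose proof (Rabs_maj2 (y2 * y2 - 1 * 1)).
  pose proof (Rabs_maj2 (y1 * y1 - 1 * 1)).
  pose proof (Rabs_maj2 (y1 * y2 - 1 * 1)). pose proof (Rabs_maj2 (y2 * y1 - 1 * 1)).
  pose proof (Rle_0_sqr (y1 - (-1+h) - (y2 - 1))). pose proof (Rle_0_sqr (y1 - (-1+h) + (y2 - 1))).
  unfold Rsqr in *.
  destruct (Rle_dec 0 (y2-1)); nra.
Qed.

Lemma dist_leg1 h : 0 <= h -> dist2 (-1, 1-h) u0 = h.
Proof. intros. unfold dist2, norm2, inner, u0; simpl.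
  replace ((-1 - -1) * (-1 - -1) + (1 - h - 1) * (1 - h - 1)) with (h*h) by ring.
  apply sqrt_square; auto. Qed.
Lemma dist_leg2 h : 0 <= h -> dist2 (-1 + h, 1) u0 = h.
Proof. intros. unfold dist2, norm2, inner, u0; simpl.
  replace ((-1 + h - -1) * (-1 + h - -1) + (1 - 1) * (1 - 1)) with (h*h) by ring.
  apply sqrt_square; auto. Qed.
Lemma dist_u0 : dist2 u0 u0 = 0.
Proof. unfold dist2, norm2, inner, u0; simpl.
  replace ((-1 - -1) * (-1 - -1) + (1 - 1) * (1 - 1)) with (0*0) by ring.
  apply sqrt_square; lra. Qed.
Lemma norm_v1 h : 0 <= h -> norm2 (0, h) = h.
Proof. intros. unfold norm2, inner; simpl. replace (0*0+h*h) with (h*h) by ring.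
  apply sqrt_square; auto. Qed.
Lemma norm_v2 h : 0 <= h -> norm2 (-h, 0) = h.
Proof. intros. unfold norm2, inner; simpl. replace (-h*-h+0*0) with (h*h) by ring.
  apply sqrt_square; auto. Qed.

Lemma deriv_zero_left g x d : 0 < d -> ex_derive g x ->
  (forall k, 0 < k < d -> g (x - k) = g x) -> Derive g x = 0.
Proof.
  intros Hd [l Hl] Hk. rewrite (is_derive_unique _ _ _ Hl).
  apply is_derive_Reals in Hl.
  destruct (Req_dec l 0) as [E|E]; [exact E|exfalso].
  destruct (Hl (Rabs l) (Rabs_pos_lt _ E)) as [[del Hdel] Hd2].
  set (k := Rmin del d / 2).
  assert (0 < k) by (unfold k; apply Rmin_case; lra).
  assert (k < del /\ k < d) as [K1 K2] by (unfold k; split; [pose proof (Rmin_l del d)|pose proof (Rmin_r del d)]; lra).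
  specialize (Hd2 (-k)). simpl in Hd2.
  replace (x + - k) with (x - k) in Hd2 by ring.
  rewrite Hk in Hd2 by lra.
  replace ((g x - g x) / - k - l) with (- l) in Hd2 by (field; lra).
  rewrite Rabs_Ropp in Hd2. assert (- k <> 0) by lra.
  assert (Rabs k < del) by (rewrite Rabs_pos_eq; lra).
  specialize (Hd2 H0 H1). rewrite ?Rabs_Ropp in Hd2. lra.
Qed.

Lemma deriv_zero_right g x d : 0 < d -> ex_derive g x ->
  (forall k, 0 < k < d -> g (x + k) = g x) -> Derive g x = 0.
Proof.
  intros Hd [l Hl] Hk. rewrite (is_derive_unique _ _ _ Hl).
  apply is_derive_Reals in Hl.
  destruct (Req_dec l 0) as [E|E]; [exact E|exfalso].
  destruct (Hl (Rabs l) (Rabs_pos_lt _ E)) as [[del Hdel] Hd2].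
  set (k := Rmin del d / 2).
  assert (0 < k) by (unfold k; apply Rmin_case; lra).
  assert (k < del /\ k < d) as [K1 K2] by (unfold k; split; [pose proof (Rmin_l del d)|pose proof (Rmin_r del d)]; lra).
  specialize (Hd2 k). simpl in Hd2.
  rewrite Hk in Hd2 by lra.
  replace ((g x - g x) / k - l) with (- l) in Hd2 by (field; lra).
  rewrite Rabs_Ropp in Hd2. assert (k <> 0) by lra.
  assert (Rabs k < del) by (rewrite Rabs_pos_eq; lra).
  specialize (Hd2 H0 H1). rewrite ?Rabs_Ropp in Hd2. lra.
Qed.

Lemma no_deriv (G : R -> R) r : 0 < r ->
  (forall k, Rabs k < r -> G (-1 + k) = fobj (-1 + k, 1)) -> ~ ex_derive G (-1).
Proof.
  intros Hr HG [l Hl]. apply is_derive_Reals in Hl.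
  destruct (Hl (/2) ltac:(lra)) as [[del Hdel] Hd2].
  set (k := Rmin (Rmin del r) 1 / 2).
  assert (0 < k) by (unfold k; repeat apply Rmin_case; lra).
  assert (k < del /\ k < r /\ k < 1) as [K1 [K2 K3]].
  { unfold k. pose proof (Rmin_l (Rmin del r) 1). pose proof (Rmin_r (Rmin del r) 1).
    pose proof (Rmin_l del r). pose proof (Rmin_r del r). lra. }
  assert (G0 : G (-1) = 2).
  { replace (-1) with (-1 + 0) by ring. rewrite HG by (rewrite Rabs_R0; lra).
    replace (-1 + 0) with (-1) by ring. apply f_u0. }
  assert (N1 : k <> 0) by lra. assert (N2 : -k <> 0) by lra.
  assert (R1 : Rabs k < del) by (rewrite Rabs_pos_eq; lra).
  assert (R2 : Rabs (-k) < del) by (rewrite Rabs_Ropp, Rabs_pos_eq; lra).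
  pose proof (Hd2 k N1 R1) as A.
  pose proof (Hd2 (-k) N2 R2) as B.
  simpl in A, B.
  rewrite HG in A by (rewrite Rabs_pos_eq; lra).
  rewrite HG in B by (rewrite Rabs_Ropp, Rabs_pos_eq; lra).
  rewrite G0 in A, B.
  rewrite f_leg2 in A by lra.
  assert (FB : fobj (-1 + - k, 1) = k*k/2 + 2*k + 2).
  { unfold fobj, ustar; simpl.
    rewrite (Rabs_R0_eq (1 * 1 - 1*1)) by ring.
    rewrite (Rabs_left ((-1 + - k) * 1 - 1 * 1)) by nra.
    rewrite (Rabs_left (1 * (-1 + - k) - 1 * 1)) by nra.
    rewrite (Rabs_right ((-1 + - k) * (-1 + - k) - 1 * 1)) by nra.
    field. }
  rewrite FB in B.
  replace ((2 - k * k / 2 - 2) / k - l) with (- k / 2 - l) in A by (field; lra).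
  replace ((k * k / 2 + 2 * k + 2 - 2) / - k - l) with (- k / 2 - 2 - l) in B by (field; lra).
  apply Rabs_def2 in A. apply Rabs_def2 in B. lra.
Qed.

Theorem proposition3 :
  frechet_subdiff fobj u0 (0, 0) /\
  ~ (forall u : pt, fobj u0 <= fobj u) /\
  (forall p : nat, (1 <= p)%nat ->
     ~ exists M : pt -> Prop, active_manifold p fobj u0 M).
Proof.
  split; [exact sd_u0|]. split.
  { intros H. specialize (H ustar). rewrite f_u0 in H. unfold fobj, ustar in H; simpl in H.
    replace (1*1-1*1) with 0 in H by ring. rewrite Rabs_R0 in H. lra. }
  intros p Hp [M [HM0 [eps [Heps [Hsub [[r [Hr [G [HG HGf]]]] [c [Hc Hsharp]]]]]]]].
  set (h0 := Rmin eps (Rmin c 1)).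
  assert (Hh0 : 0 < h0) by (unfold h0; repeat apply Rmin_case; lra).
  assert (Hh0b : h0 <= eps /\ h0 <= c /\ h0 <= 1).
  { unfold h0. pose proof (Rmin_l eps (Rmin c 1)). pose proof (Rmin_r eps (Rmin c 1)).
    pose proof (Rmin_l c 1). pose proof (Rmin_r c 1). lra. }
  assert (Leg1 : forall h, 0 < h < h0 -> M (-1, 1-h)).
  { intros h Hh. apply NNPP. intro Hn.
    assert (B : ball2 u0 eps (-1, 1-h)) by (unfold ball2; rewrite dist_leg1; lra).
    assert (F : Rabs (fobj (-1, 1-h) - fobj u0) < eps).
    { rewrite f_leg1, f_u0 by lra. rewrite Rabs_left by nra. nra. }
    pose proof (Hsharp _ _ B F Hn (sd_leg1 h ltac:(lra))) as C.
    rewrite norm_v1 in C; lra. }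
  assert (Leg2 : forall h, 0 < h < h0 -> M (-1 + h, 1)).
  { intros h Hh. apply NNPP. intro Hn.
    assert (B : ball2 u0 eps (-1 + h, 1)) by (unfold ball2; rewrite dist_leg2; lra).
    assert (F : Rabs (fobj (-1 + h, 1) - fobj u0) < eps).
    { rewrite f_leg2, f_u0 by lra. rewrite Rabs_left by nra. nra. }
    pose proof (Hsharp _ _ B F Hn (sd_leg2 h ltac:(lra))) as C.
    rewrite norm_v2 in C; lra. }
  assert (Bu0 : forall e, 0 < e -> ball2 u0 e u0) by (intros; unfold ball2; rewrite dist_u0; lra).
  destruct p as [|q]; [lia|].
  destruct Hsub as [D0|[D1|D2]].
  - destruct (D0 u0 (conj HM0 (Bu0 eps Heps))) as [r0 [Hr0 [F1 [F2 [HF1 [HF2 [Hjac Hiff]]]]]]].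
    apply (Hjac u0 (Bu0 r0 Hr0)).
    assert (Z : forall F : pt -> R, Cp_on (S q) F (ball2 u0 r0) ->
               (forall z, ball2 u0 r0 z -> M z /\ ball2 u0 eps z -> F z = 0) ->
               partial2 F u0 = 0).
    { intros F HF HFz. destruct HF as [_ [HFd _]].
      unfold partial2. destruct (HFd u0 (Bu0 r0 Hr0)) as [_ Hd].
      apply (deriv_zero_left _ _ (Rmin h0 r0)); [apply Rmin_case; lra| exact Hd|].
      intros k Hk. pose proof (Rmin_l h0 r0). pose proof (Rmin_r h0 r0).
      unfold u0 in *; simpl in *.
      assert (Bk : forall e, k < e -> ball2 (-1,1) e (-1, 1 - k)).
      { intros e He. unfold ball2. change (-1,1) with u0. rewrite dist_leg1; lra. }
      rewrite (HFz (-1, 1-k)) by first [ (apply Bk; lra) | (split; [apply Leg1; lra| apply Bk; lra]) ].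
      rewrite (HFz (-1, 1)) by first [ (apply Bu0; lra) | (split; [exact HM0|apply Bu0; lra]) ].
      reflexivity. }
    rewrite (Z F1 HF1), (Z F2 HF2); [ring| |];
      intros z Bz Hz; apply Hiff; auto.
  - destruct (D1 u0 (conj HM0 (Bu0 eps Heps))) as [r0 [Hr0 [F [HF [Hgrad Hiff]]]]].
    apply (Hgrad u0 (Bu0 r0 Hr0)).
    destruct HF as [_ [HFd _]]. destruct (HFd u0 (Bu0 r0 Hr0)) as [Hd1 Hd2].
    assert (Bk1 : forall k e, 0 < k < e -> ball2 (-1,1) e (-1, 1 - k)).
    { intros k e He. unfold ball2. change (-1,1) with u0. rewrite dist_leg1; lra. }
    assert (Bk2 : forall k e, 0 < k < e -> ball2 (-1,1) e (-1 + k, 1)).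
    { intros k e He. unfold ball2. change (-1,1) with u0. rewrite dist_leg2; lra. }
    assert (F0 : F u0 = 0) by (apply Hiff; auto).
    f_equal.
    + unfold partial1. apply (deriv_zero_right _ _ (Rmin h0 r0)); [apply Rmin_case; lra| exact Hd1|].
      intros k Hk. pose proof (Rmin_l h0 r0). pose proof (Rmin_r h0 r0).
      unfold u0 in *; simpl in *. rewrite F0.
      apply Hiff; [apply Bk2; lra|]. split; [apply Leg2; lra|apply Bk2; lra].
    + unfold partial2. apply (deriv_zero_left _ _ (Rmin h0 r0)); [apply Rmin_case; lra| exact Hd2|].
      intros k Hk. pose proof (Rmin_l h0 r0). pose proof (Rmin_r h0 r0).
      unfold u0 in *; simpl in *. rewrite F0.
      apply Hiff; [apply Bk1; lra|]. split; [apply Leg1; lra|apply Bk1; lra].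
  - destruct (D2 u0 (conj HM0 (Bu0 eps Heps))) as [r1 [Hr1 Hball]].
    destruct HG as [_ [HGd _]]. destruct (HGd u0 (Bu0 r Hr)) as [Hd1 _].
    set (r2 := Rmin r1 r).
    assert (Hr2 : 0 < r2) by (unfold r2; apply Rmin_case; lra).
    pose proof (Rmin_l r1 r). pose proof (Rmin_r r1 r).
    apply (no_deriv (fun t => G (t, snd u0)) r2 Hr2); [|exact Hd1].
    intros k Hk. simpl.
    assert (Bk : forall e, Rabs k < e -> ball2 u0 e (-1 + k, 1)).
    { intros e He. unfold ball2, dist2, norm2, inner, u0; simpl.
      replace ((-1 + k - -1) * (-1 + k - -1) + (1 - 1) * (1 - 1)) with (Rabs k * Rabs k).
      - rewrite sqrt_square; [lra|apply Rabs_pos].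
      - rewrite <- Rabs_mult, Rabs_pos_eq by nra. ring. }
    apply HGf; [|apply Bk; unfold r2 in *; lra].
    apply (Hball (-1 + k, 1)). apply Bk. unfold r2 in *; lra.
Qed.
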